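(* For every closed recHML formula $\varphi$, $[\![\varphi]\!]_F\cap\mathrm{Act}^\omega=[\![\varphi]\!]_L$.
   Context: Fix a finite set $\mathrm{Act}$ of actions. recHML formulae: $\varphi::=\mathrm{tt}\mid\mathrm{ff}\mid\varphi\vee\varphi\mid\varphi\wedge\varphi\mid\langle A\rangle\varphi\mid[A]\varphi\mid\min X.\varphi\mid\max X.\varphi\mid X$ ($A\subseteq\mathrm{Act}$), guarded. For a set of traces $D$ (either $D=\mathrm{Act}^\omega$, giving the linear-time semantics $[\![\cdot]\!]_L$, or $D=\mathrm{Fin}=\mathrm{Act}^\omega\cup\mathrm{Act}^*$, giving the finfinite semantics $[\![\cdot]\!]_F$) and an environment $\sigma$ from variables to subsets of $D$: $[\![\mathrm{tt}]\!]=D$, $[\![\mathrm{ff}]\!]=\emptyset$, $\vee,\wedge$ are union/intersection, $[\![\langle A\rangle\varphi,\sigma]\!]=\{ag\in D\mid a\in A,g\in[\![\varphi,\sigma]\!]\}$, $[\![[A]\varphi,\sigma]\!]=\{g\in D\mid\forall a\in A,\forall g'.\ g=ag'\Rightarrow g'\in[\![\varphi,\sigma]\!]\}$, $[\![\min X.\varphi,\sigma]\!]=\bigcap\{S\subseteq D\mid[\![\varphi,\sigma[X\mapsto S]]\!]\subseteq S\}$, $[\![\max X.\varphi,\sigma]\!]=\bigcup\{S\subseteq D\mid S\subseteq[\![\varphi,\sigma[X\mapsto S]]\!]\}$, $[\![X,\sigma]\!]=\sigma(X)$. *)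

(* Defs.v *)
From mathcomp Require Import all_boot.
Set Implicit Arguments. Unset Strict Implicit. Unset Printing Implicit Defensive.

Section RecHML.
Variable Act : finType.

Inductive trace : Type :=
| TFin of seq Act
| TInf of (nat -> Act).

Definition tcons (a : Act) (g : trace) : trace :=
  match g with
  | TFin l => TFin (a :: l)
  | TInf f => TInf (fun n => if n is k.+1 then f k else a)
  end.

(* Act^omega and Fin = Act^omega u Act^star as subsets of trace *)
Definition Omega : trace -> Prop := fun g => exists f, g = TInf f.
Definition Finf : trace -> Prop := fun _ => True.

Inductive form : Type :=
| ftt | fff
| fOr of form & form
| fAnd of form & form
| fDia of {set Act} & form
| fBox of {set Act} & form
| fMin of nat & form
| fMax of nat & form
| fVar of nat.

Fixpoint free (X : nat) (phi : form) : Prop :=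
  match phi with
  | ftt | fff => False
  | fOr p q | fAnd p q => free X p \/ free X q
  | fDia _ p | fBox _ p => free X p
  | fMin Y p | fMax Y p => Y <> X /\ free X p
  | fVar Y => Y = X
  end.

Definition closed_form (phi : form) : Prop := forall X, ~ free X phi.

Fixpoint guarded_in (X : nat) (phi : form) : Prop :=
  match phi with
  | ftt | fff => True
  | fOr p q | fAnd p q => guarded_in X p /\ guarded_in X q
  | fDia _ _ | fBox _ _ => True
  | fMin Y p | fMax Y p => Y = X \/ guarded_in X p
  | fVar Y => Y <> X
  end.

Fixpoint guarded (phi : form) : Prop :=
  match phi with
  | ftt | fff | fVar _ => True
  | fOr p q | fAnd p q => guarded p /\ guarded q
  | fDia _ p | fBox _ p => guarded p
  | fMin X p | fMax X p => guarded_in X p /\ guarded p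
  end.

Definition env := nat -> trace -> Prop.

Definition upd (s : env) (X : nat) (S : trace -> Prop) : env :=
  fun Y => if Y == X then S else s Y.

Fixpoint sem (D : trace -> Prop) (s : env) (phi : form) : trace -> Prop :=
  match phi with
  | ftt => D
  | fff => fun _ => False
  | fOr p q => fun g => sem D s p g \/ sem D s q g
  | fAnd p q => fun g => sem D s p g /\ sem D s q g
  | fDia A p => fun g => D g /\
      exists a g', a \in A /\ g = tcons a g' /\ sem D s p g'
  | fBox A p => fun g => D g /\
      forall a g', a \in A -> g = tcons a g' -> sem D s p g'
  | fMin X p => fun g =>
      forall S : trace -> Prop, (forall h, S h -> D h) ->
        (forall h, sem D (upd s X S) p h -> S h) -> S g
  | fMax X p => fun g =>
      exists S : trace -> Prop, (forall h, S h -> D h) /\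
        (forall h, S h -> sem D (upd s X S) p h) /\ S g
  | fVar X => s X
  end.

Definition semL := sem Omega.
Definition semF := sem Finf.

End RecHML.

(* Main.v *)
Require Import Defs.
From mathcomp Require Import all_boot.

Lemma tcons_Om (Act : finType) (a : Act) g : Omega (tcons a g) -> Omega g.
Proof. by case: g => [l|f] [f' H] //; exists f. Qed.

Lemma gen (Act : finType) (phi : form Act) : forall (sF sL : env Act),
  (forall X, free X phi -> forall g, Omega g -> (sF X g <-> sL X g)) ->
  (forall X, free X phi -> forall g, sL X g -> Omega g) ->
  forall g, (sem (@Finf Act) sF phi g /\ Omega g) <-> sem (@Omega Act) sL phi g.
Proof.
elim: phi => [||p IHp q IHq|p IHp q IHq|A p IHp|A p IHp|X p IHp|X p IHp|X] sF sL H1 H2 g /=.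
- by split => [[]|].
- by split => [[]|].
- have E1 := IHp sF sL (fun Y h => H1 Y (or_introl h)) (fun Y h => H2 Y (or_introl h)).
  have E2 := IHq sF sL (fun Y h => H1 Y (or_intror h)) (fun Y h => H2 Y (or_intror h)).
  split => [[[a|a] Om]|[a|a]].
  + by left; apply/E1.
  + by right; apply/E2.
  + by have [? ?] := proj2 (E1 g) a; split => //; left.
  + by have [? ?] := proj2 (E2 g) a; split => //; right.
- have E1 := IHp sF sL (fun Y h => H1 Y (or_introl h)) (fun Y h => H2 Y (or_introl h)).
  have E2 := IHq sF sL (fun Y h => H1 Y (or_intror h)) (fun Y h => H2 Y (or_intror h)).
  split => [[[a b] Om]|[a b]].
  + by split; [apply/E1|apply/E2].
  + by have [? ?] := proj2 (E1 g) a; have [? ?] := proj2 (E2 g) b.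
- have E := IHp sF sL H1 H2.
  split => [[[_ [a [g' [Ha [-> Hg]]]]] Om]|[Om [a [g' [Ha [Eg Hg]]]]]].
  + split => //; exists a, g'; split => //; split => //; apply: (proj1 (E g')); split => //.
    exact: tcons_Om Om.
  + by split => //; split => //; exists a, g'; split => //; split => //; exact: (proj1 (proj2 (E g') Hg)).
- have E := IHp sF sL H1 H2.
  split => [[[_ Hb] Om]|[Om Hb]].
  + split => // a g' Ha Eg; apply: (proj1 (E g')); split; first exact: Hb a g' Ha Eg.
    by move: Om; rewrite Eg; apply: tcons_Om.
  + split => //; split => // a g' Ha Eg; exact: (proj1 (proj2 (E g') (Hb a g' Ha Eg))).
-
  have Hinv : forall (SF SL : trace Act -> Prop),
      (forall h, Omega h -> (SF h <-> SL h)) -> (forall h, SL h -> Omega h) ->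
      forall h, (sem (@Finf Act) (upd sF X SF) p h /\ Omega h) <-> sem (@Omega Act) (upd sL X SL) p h.
    move=> SF SL E1 E2; apply: IHp => Y HY h; rewrite /upd;
      (case: eqP => [_|ne]; [by [exact: E1|exact: E2] |
      by [exact: (H1 Y (conj (fun e => ne (esym e)) HY)) | exact: (H2 Y (conj (fun e => ne (esym e)) HY))]]).
  split.
  + move=> [HF Om] S SO HS.
    have := HF (fun h => Omega h -> S h) (fun _ _ => I).
    apply => // h Hh Oh; apply: HS; apply/(Hinv (fun h => Omega h -> S h) S) => //.
    by move=> k Ok; split => [/(_ Ok)|].
  + move=> HL.
    have Om : Omega g.
      apply: (HL (@Omega Act)) => // h Hh.
      by have [_ ?] := proj2 (Hinv (@Omega Act) (@Omega Act) (fun _ _ => conj id id) (fun _ x => x) h) Hh.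
    split => // S _ HS.
    have := HL (fun h => S h /\ Omega h) (fun h (x : S h /\ Omega h) => proj2 x).
    have EE : forall k, Omega k -> (S k <-> S k /\ Omega k).
      by move=> k Ok; split => [?|[]].
    case=> // h Hh.
    have [a b] := proj2 (Hinv S (fun h => S h /\ Omega h) EE (fun h (x : S h /\ Omega h) => proj2 x) h) Hh.
    by split => //; apply: HS.
-
  have Hinv : forall (SF SL : trace Act -> Prop),
      (forall h, Omega h -> (SF h <-> SL h)) -> (forall h, SL h -> Omega h) ->
      forall h, (sem (@Finf Act) (upd sF X SF) p h /\ Omega h) <-> sem (@Omega Act) (upd sL X SL) p h.
    move=> SF SL E1 E2; apply: IHp => Y HY h; rewrite /upd;
      (case: eqP => [_|ne]; [by [exact: E1|exact: E2] |
      by [exact: (H1 Y (conj (fun e => ne (esym e)) HY)) | exact: (H2 Y (conj (fun e => ne (esym e)) HY))]]).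
  split.
  + move=> [[S [_ [HS Sg]]] Om].
    exists (fun h => S h /\ Omega h); split; first by move=> h [].
    have EE : forall k, Omega k -> (S k <-> S k /\ Omega k).
      by move=> k Ok; split => [?|[]].
    split => // h [Sh Oh].
    exact: (proj1 (Hinv S (fun h => S h /\ Omega h) EE (fun h (x : S h /\ Omega h) => proj2 x) h) (conj (HS h Sh) Oh)).
  + move=> [S [SO [HS Sg]]]; split; last exact: SO.
    exists S; split => //; split => // h Sh.
    exact: (proj1 (proj2 (Hinv S S (fun _ _ => conj id id) SO h) (HS h Sh))).
- split => [[Hs Om]|Hs].
  + by apply/(H1 X erefl).
  + have Om := H2 X erefl g Hs; split => //; exact/(H1 X erefl).
Qed.

Theorem mainTheorem13 (Act : finType) (phi : form Act) :
  closed_form phi -> guarded phi ->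
  forall (sF sL : env Act) (g : trace Act),
    (semF sF phi g /\ Omega g) <-> semL sL phi g.
Proof.
move=> Hc _ sF sL g; apply: gen => X HX; by case: (Hc X HX).
Qed.
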